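(* Let $\varrho\in C^2(\mathbb{C};\mathbb{C})$ be not $\mathbb{R}$-affine, let $K\subseteq\mathbb{C}$ be compact and $\varepsilon>0$. Then there exist $\mathbb{C}$-affine maps $\phi:\mathbb{C}\to\mathbb{C}^4$ and $\psi:\mathbb{C}^4\to\mathbb{C}$ such that at least one of the three inequalities $$\sup_{z\in K}|(\psi\circ\varrho^{\times4}\circ\phi)(z)-z\overline{z}|<\varepsilon,\quad \sup_{z\in K}|(\psi\circ\varrho^{\times4}\circ\phi)(z)-z^2|<\varepsilon,\quad \sup_{z\in K}|(\psi\circ\varrho^{\times4}\circ\phi)(z)-\overline{z}^2|<\varepsilon$$ holds.
   Context: $\varrho$ is $\mathbb{R}$-affine if it is affine as a map $\mathbb{R}^2\to\mathbb{R}^2$ under $\mathbb{C}\cong\mathbb{R}^2$. A map $\mathbb{C}^a\to\mathbb{C}^b$ is $\mathbb{C}$-affine if it has the form $z\mapsto Az+b$ with complex $A,b$. $\varrho^{\times4}$ applies $\varrho$ componentwise on $\mathbb{C}^4$. $C^2(\mathbb{C};\mathbb{C})$: continuous partial derivatives (real sense) up to order 2. *)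

(* Defs.v *)
From Stdlib Require Import Reals.
From Coquelicot Require Import Coquelicot.
Open Scope R_scope.

Definition dx (f : C -> R) : C -> R := fun p => Derive (fun t => f (t, snd p)) (fst p).
Definition dy (f : C -> R) : C -> R := fun p => Derive (fun t => f (fst p, t)) (snd p).

Definition C1R2 (f : C -> R) : Prop :=
  (forall p : C, continuous f p) /\
  (forall p : C, ex_derive (fun t => f (t, snd p)) (fst p)) /\
  (forall p : C, ex_derive (fun t => f (fst p, t)) (snd p)) /\
  (forall p : C, continuous (dx f) p) /\
  (forall p : C, continuous (dy f) p).

Definition C2R2 (f : C -> R) : Prop := C1R2 f /\ C1R2 (dx f) /\ C1R2 (dy f).

Definition C2C (rho : C -> C) : Prop :=
  C2R2 (fun z => Re (rho z)) /\ C2R2 (fun z => Im (rho z)).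

Definition R_affine (rho : C -> C) : Prop :=
  exists a b c d e f : R, forall x y : R,
    rho (x, y) = (a * x + b * y + e, c * x + d * y + f).

Definition compactC (K : C -> Prop) : Prop :=
  forall (I : Type) (U : I -> C -> Prop),
    (forall i, open (U i)) ->
    (forall z, K z -> exists i, U i z) ->
    exists l : list I, forall z, K z -> exists i, List.In i l /\ U i z.

Definition C4 : Type := (C * C * C * C)%type.

Definition rho4 (rho : C -> C) (w : C4) : C4 :=
  match w with (w1, w2, w3, w4) => (rho w1, rho w2, rho w3, rho w4) end.

Definition Caffine_in (phi : C -> C4) : Prop :=
  exists a1 a2 a3 a4 b1 b2 b3 b4 : C, forall z : C,
    phi z = (Cplus (Cmult a1 z) b1, Cplus (Cmult a2 z) b2,
             Cplus (Cmult a3 z) b3, Cplus (Cmult a4 z) b4).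

Definition Caffine_out (psi : C4 -> C) : Prop :=
  exists c1 c2 c3 c4 d : C, forall w1 w2 w3 w4 : C,
    psi (w1, w2, w3, w4) =
      Cplus (Cplus (Cplus (Cplus (Cmult c1 w1) (Cmult c2 w2)) (Cmult c3 w3))
                   (Cmult c4 w4)) d.

(* sup_{z in K} g z < eps  (with sup of the empty set = -infinity). *)
Definition sup_lt (K : C -> Prop) (g : C -> R) (eps : R) : Prop :=
  exists M : R, M < eps /\ forall z, K z -> g z <= M.

(* Main.v *)
Require Import Defs.
From Stdlib Require Import Reals Lra Psatz.
From Coquelicot Require Import Coquelicot.
Open Scope R_scope.

Lemma mvi (g g' : R -> R) (x y M : R) :
  (forall t, Rmin x y <= t <= Rmax x y -> is_derive g t (g' t)) ->
  (forall t, Rmin x y <= t <= Rmax x y -> Rabs (g' t) <= M) ->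
  Rabs (g y - g x) <= M * Rabs (y - x).
Proof.
  intros Hd Hb.
  destruct (MVT_gen g x y g') as [c [Hc Heq]].
  - intros t Ht. apply Hd. lra.
  - intros t Ht. apply continuity_pt_filterlim.
    apply (ex_derive_continuous (K:=R_AbsRing) (V:=R_NormedModule)). eexists. apply Hd. exact Ht.
  - rewrite Heq, Rabs_mult. apply Rmult_le_compat_r. apply Rabs_pos. now apply Hb.
Qed.

Lemma seg_abs (x a t : R) : Rmin x (x + a) <= t <= Rmax x (x + a) -> Rabs (t - x) <= Rabs a.
Proof. unfold Rmin, Rmax; destruct Rle_dec; intros; split_Rabs; lra. Qed.

Lemma taylor2 (f : R -> R) (x0 a L eta : R) :
  (forall t, ex_derive f t) -> (forall t, ex_derive (Derive f) t) ->
  (forall t, Rabs (t - x0) <= Rabs a -> Rabs (Derive (Derive f) t - L) <= eta) ->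
  Rabs (f (x0 + a) - f x0 - a * Derive f x0 - L * a ^ 2 / 2) <= eta * a ^ 2.
Proof.
  intros H1 H2 H3.
  assert (Heta : 0 <= eta).
  { apply Rle_trans with (Rabs (Derive (Derive f) x0 - L)). apply Rabs_pos.
    apply H3. replace (x0 - x0) with 0 by ring. rewrite Rabs_R0. apply Rabs_pos. }
  set (h := fun t => f t - f x0 - (t - x0) * Derive f x0 - L * (t - x0) ^ 2 / 2).
  set (h' := fun t => Derive f t - Derive f x0 - L * (t - x0)).
  assert (Hh : forall t, is_derive h t (h' t)).
  { intros t. unfold h, h'. auto_derive. apply H1. change (Derive (fun x => f x) t) with (Derive f t). field. }
  assert (Hh' : forall t, Rabs (t - x0) <= Rabs a -> Rabs (h' t) <= eta * Rabs a).
  { intros t Ht.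
    set (k := fun s => Derive f s - L * s).
    replace (h' t) with (k t - k x0) by (unfold k, h'; ring).
    apply Rle_trans with (eta * Rabs (t - x0)).
    - apply mvi with (g' := fun s => Derive (Derive f) s - L).
      + intros s _. unfold k. auto_derive. apply H2. change (Derive (fun x => Derive f x) s) with (Derive (Derive f) s). ring.
      + intros s Hs. apply H3. apply Rle_trans with (Rabs (t - x0)); [|exact Ht].
        revert Hs. unfold Rmin, Rmax; destruct Rle_dec; intros; split_Rabs; lra.
    - apply Rmult_le_compat_l; lra. }
  replace (f (x0 + a) - f x0 - a * Derive f x0 - L * a ^ 2 / 2) with (h (x0 + a) - h x0)
    by (unfold h; field).
  replace (eta * a ^ 2) with ((eta * Rabs a) * Rabs (x0 + a - x0)).
  2:{ replace (x0 + a - x0) with a by ring. rewrite Rmult_assoc, <- Rabs_mult.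
      rewrite Rabs_right. ring. nra. }
  apply mvi with (g' := h').
  - intros; apply Hh.
  - intros t Ht. apply Hh'. now apply seg_abs.
Qed.

Lemma cont_ball (f : C -> R) (p : C) : continuous f p ->
  forall eta, 0 < eta -> exists del, 0 < del /\ forall x y,
    Rabs (x - fst p) < del -> Rabs (y - snd p) < del -> Rabs (f (x, y) - f p) < eta.
Proof.
  intros Hc eta He.
  destruct (Hc (ball (f p) eta) (locally_ball (f p) (mkposreal eta He))) as [d Hd].
  exists d. split. apply cond_pos. intros x y Hx Hy.
  apply (Hd (x, y)). split; assumption.
Qed.

Lemma deriv_lin (G : R -> R) c t d : is_derive G t d -> is_derive (fun s => G s - s * c) t (d - c).
Proof.
  intros H. assert (E : ex_derive G t) by (exists d; exact H).
  auto_derive. exact E. change (Derive (fun x : R => G x) t) with (Derive G t). rewrite (is_derive_unique G t d H). ring.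
Qed.

Lemma KL (F : C -> R) (HF : C2R2 F) (p : C) (eta : R) : 0 < eta ->
  exists del, 0 < del /\ forall a b, Rabs a < del -> Rabs b < del ->
  Rabs (F (fst p + a, snd p + b) + F (fst p - a, snd p - b) - 2 * F p
        - (a ^ 2 * dx (dx F) p + 2 * a * b * dx (dy F) p + b ^ 2 * dy (dy F) p))
  <= 3 * eta * (a ^ 2 + b ^ 2).
Proof.
  intros He.
  destruct HF as [[Fc [Fex [Fey [Fxc Fyc]]]] [[Gc [Gex [Gey [Gxc Gyc]]]] [Hc [Hex [Hey [Hxc Hyc]]]]]].
  destruct (cont_ball _ p (Gxc p) eta He) as [d1 [Hd1 C1]].
  destruct (cont_ball _ p (Hxc p) eta He) as [d2 [Hd2 C2]].
  destruct (cont_ball _ p (Hyc p) eta He) as [d3 [Hd3 C3]].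
  exists (Rmin d1 (Rmin d2 d3)). split.
  { apply Rmin_pos; [|apply Rmin_pos]; assumption. }
  intros a b Ha Hb.
  assert (Ha1 : Rabs a < d1) by (eapply Rlt_le_trans; [exact Ha|apply Rmin_l]).
  assert (Ha2 : Rabs a < d2) by (eapply Rlt_le_trans; [exact Ha|eapply Rle_trans; [apply Rmin_r|apply Rmin_l]]).
  assert (Hb3 : Rabs b < d3) by (eapply Rlt_le_trans; [exact Hb|eapply Rle_trans; [apply Rmin_r|apply Rmin_r]]).
  assert (Ha3 : Rabs a < d3) by (eapply Rlt_le_trans; [exact Ha|eapply Rle_trans; [apply Rmin_r|apply Rmin_r]]).
  destruct p as [p1 p2]; simpl in *.
  assert (E3 := taylor2 (fun t => F (t, p2)) p1 a (dx (dx F) (p1, p2)) eta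
     (fun t => Fex (t, p2)) (fun t => Gex (t, p2))).
  assert (E4 := taylor2 (fun t => F (t, p2)) p1 (- a) (dx (dx F) (p1, p2)) eta
     (fun t => Fex (t, p2)) (fun t => Gex (t, p2))).
  assert (E1 := taylor2 (fun t => F (p1 + a, t)) p2 b (dy (dy F) (p1, p2)) eta
     (fun t => Fey (p1 + a, t)) (fun t => Hey (p1 + a, t))).
  assert (E2 := taylor2 (fun t => F (p1 - a, t)) p2 (- b) (dy (dy F) (p1, p2)) eta
     (fun t => Fey (p1 - a, t)) (fun t => Hey (p1 - a, t))).
  assert (E5 : Rabs ((dy F (p1 + a, p2) - (p1 + a) * dx (dy F) (p1, p2))
                    - (dy F (p1 - a, p2) - (p1 - a) * dx (dy F) (p1, p2)))
               <= eta * Rabs ((p1 + a) - (p1 - a))).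
  { apply mvi with (g := fun t => dy F (t, p2) - t * dx (dy F) (p1, p2))
      (g' := fun t => dx (dy F) (t, p2) - dx (dy F) (p1, p2)).
    - intros t _. apply deriv_lin. apply Derive_correct. exact (Hex (t, p2)).
    - intros t Ht. left. apply C2. 2: replace (p2 - p2) with 0 by ring; rewrite Rabs_R0; lra.
      revert Ht. unfold Rmin, Rmax; destruct Rle_dec; intros; split_Rabs; lra. }
  assert (B3 : forall t, Rabs (t - p1) <= Rabs a ->
     Rabs (Derive (Derive (fun t0 : R => F (t0, p2))) t - dx (dx F) (p1, p2)) <= eta).
  { intros t Ht. left. change (Derive (Derive (fun t0 : R => F (t0, p2))) t) with (dx (dx F) (t, p2)).
    apply C1; [lra|replace (p2 - p2) with 0 by ring; rewrite Rabs_R0; lra]. }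
  specialize (E3 B3). rewrite Rabs_Ropp in E4. specialize (E4 B3).
  assert (B1 : forall t, Rabs (t - p2) <= Rabs b ->
     Rabs (Derive (Derive (fun t0 : R => F (p1 + a, t0))) t - dy (dy F) (p1, p2)) <= eta).
  { intros t Ht. left. change (Derive (Derive (fun t0 : R => F (p1 + a, t0))) t) with (dy (dy F) (p1 + a, t)).
    apply C3; [replace (p1 + a - p1) with a by ring; lra|lra]. }
  specialize (E1 B1).
  assert (B2 : forall t, Rabs (t - p2) <= Rabs (- b) ->
     Rabs (Derive (Derive (fun t0 : R => F (p1 - a, t0))) t - dy (dy F) (p1, p2)) <= eta).
  { intros t Ht. rewrite Rabs_Ropp in Ht. left. change (Derive (Derive (fun t0 : R => F (p1 - a, t0))) t) with (dy (dy F) (p1 - a, t)).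
    apply C3; [replace (p1 - a - p1) with (- a) by ring; rewrite Rabs_Ropp; lra|lra]. }
  specialize (E2 B2).
  change (Derive (fun t : R => F (t, p2)) p1) with (dx F (p1, p2)) in E3, E4.
  change (Derive (fun t : R => F (p1 + a, t)) p2) with (dy F (p1 + a, p2)) in E1.
  change (Derive (fun t : R => F (p1 - a, t)) p2) with (dy F (p1 - a, p2)) in E2.
  cbv beta in E1, E2, E3, E4.
  replace (p1 + - a) with (p1 - a) in E4 by ring.
  replace (p2 + - b) with (p2 - b) in E2 by ring.
  replace ((- a) ^ 2) with (a ^ 2) in E4 by ring.
  replace ((- b) ^ 2) with (b ^ 2) in E2 by ring.
  replace (p1 + a - (p1 - a)) with (2 * a) in E5 by ring.
  set (e5 := dy F (p1 + a, p2) - (p1 + a) * dx (dy F) (p1, p2) -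
       (dy F (p1 - a, p2) - (p1 - a) * dx (dy F) (p1, p2))) in E5.
  assert (H5 : Rabs (b * e5) <= eta * (a ^ 2 + b ^ 2)).
  { rewrite Rabs_mult. apply Rle_trans with (Rabs b * (eta * Rabs (2 * a))).
    apply Rmult_le_compat_l. apply Rabs_pos. exact E5.
    rewrite Rabs_mult, (Rabs_right 2) by lra.
    rewrite <- (pow2_abs a), <- (pow2_abs b).
    assert (0 <= Rabs a) by apply Rabs_pos. assert (0 <= Rabs b) by apply Rabs_pos.
    assert (0 <= eta * (Rabs a - Rabs b)^2) by (apply Rmult_le_pos; [lra|apply pow2_ge_0]).
    nra. }
  replace (3 * eta * (a * (a * 1) + b * (b * 1))) with (3 * eta * (a ^ 2 + b ^ 2)) by ring.
  match goal with |- Rabs ?X <= _ =>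
    replace X with (
     (F (p1 + a, p2 + b) - F (p1 + a, p2) - b * dy F (p1 + a, p2) - dy (dy F) (p1, p2) * b ^ 2 / 2)
   + (F (p1 - a, p2 - b) - F (p1 - a, p2) - - b * dy F (p1 - a, p2) - dy (dy F) (p1, p2) * b ^ 2 / 2)
   + (F (p1 + a, p2) - F (p1, p2) - a * dx F (p1, p2) - dx (dx F) (p1, p2) * a ^ 2 / 2)
   + (F (p1 - a, p2) - F (p1, p2) - - a * dx F (p1, p2) - dx (dx F) (p1, p2) * a ^ 2 / 2)
   + b * e5) end.
  2:{ unfold e5. field. }
  apply Rabs_le_between in E1. apply Rabs_le_between in E2. apply Rabs_le_between in E3.
  apply Rabs_le_between in E4. apply Rabs_le_between in H5. apply Rabs_le_between.
  lra.
Qed.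

Lemma const_of_deriv0 (g : R -> R) : (forall t, is_derive g t 0) -> forall x y, g y = g x.
Proof.
  intros H x y. assert (E := mvi g (fun _ => 0) x y 0 (fun t _ => H t)).
  assert (Rabs (g y - g x) <= 0). { rewrite <- (Rmult_0_l (Rabs (y - x))). apply E. intros. rewrite Rabs_R0. lra. }
  assert (0 <= Rabs (g y - g x)) by apply Rabs_pos.
  assert (Rabs (g y - g x) = 0) by lra. apply Rabs_eq_0 in H2. lra.
Qed.

Lemma deriv0 (f : R -> R) t : ex_derive f t -> Derive f t = 0 -> is_derive f t 0.
Proof. intros E D; rewrite <- D; apply Derive_correct, E. Qed.

Lemma deriv_val (f : R -> R) t v : ex_derive f t -> Derive f t = v -> is_derive f t v.
Proof. intros E D; rewrite <- D; apply Derive_correct, E. Qed.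

Lemma deriv_lin0 (G : R -> R) c t : is_derive G t c -> is_derive (fun s => G s - s * c) t 0.
Proof. intros H. assert (H' := deriv_lin G c t c H). rewrite Rminus_eq_0 in H'. exact H'. Qed.

Lemma zero_affine (F : C -> R) (HF : C2R2 F) :
  (forall p, dx (dx F) p = 0 /\ dx (dy F) p = 0 /\ dy (dy F) p = 0) ->
  exists a b e, forall x y, F (x, y) = a * x + b * y + e.
Proof.
  intros Hz.
  destruct HF as [[Fc [Fex [Fey [Fxc Fyc]]]] [[Gc [Gex [Gey [Gxc Gyc]]]] [Hc [Hex [Hey [Hxc Hyc]]]]]].
  assert (S1 : forall x y, dy F (x, y) = dy F (x, 0)).
  { intros x y. apply (const_of_deriv0 (fun t => dy F (x, t))).
    intros t. destruct (Hz (x, t)) as [_ [_ Z]]. apply deriv0; [exact (Hey (x, t))|exact Z]. }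
  assert (S2 : forall x, dy F (x, 0) = dy F (0, 0)).
  { intros x. apply (const_of_deriv0 (fun t => dy F (t, 0))).
    intros t. destruct (Hz (t, 0)) as [_ [Z _]]. apply deriv0; [exact (Hex (t, 0))|exact Z]. }
  assert (S3 : forall x, dx F (x, 0) = dx F (0, 0)).
  { intros x. apply (const_of_deriv0 (fun t => dx F (t, 0))).
    intros t. destruct (Hz (t, 0)) as [Z _]. apply deriv0; [exact (Gex (t, 0))|exact Z]. }
  set (b := dy F (0, 0)). set (a := dx F (0, 0)).
  assert (S4 : forall x y, F (x, y) - y * b = F (x, 0) - 0 * b).
  { intros x y. apply (const_of_deriv0 (fun t => F (x, t) - t * b)).
    intros t. apply deriv_lin0. apply deriv_val. exact (Fey (x, t)).
    change (dy F (x, t) = b). rewrite S1, S2; reflexivity. }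
  assert (S5 : forall x, F (x, 0) - x * a = F (0, 0) - 0 * a).
  { intros x. apply (const_of_deriv0 (fun t => F (t, 0) - t * a)).
    intros t. apply deriv_lin0. apply deriv_val. exact (Fex (t, 0)).
    change (dx F (t, 0) = a). rewrite S3; reflexivity. }
  exists a, b, (F (0, 0)). intros x y.
  specialize (S4 x y). specialize (S5 x). lra.
Qed.

Lemma Cmod_le_sum (w : C) : Cmod w <= Rabs (fst w) + Rabs (snd w).
Proof.
  unfold Cmod. rewrite <- (sqrt_pow2 (Rabs (fst w) + Rabs (snd w))).
  2:{ assert (0 <= Rabs (fst w)) by apply Rabs_pos. assert (0 <= Rabs (snd w)) by apply Rabs_pos. lra. }
  apply sqrt_le_1_alt. rewrite <- (pow2_abs (fst w)), <- (pow2_abs (snd w)).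
  assert (0 <= Rabs (fst w)) by apply Rabs_pos. assert (0 <= Rabs (snd w)) by apply Rabs_pos. nra.
Qed.

Definition QF (F : C -> R) (p v : C) : R :=
  fst v ^ 2 * dx (dx F) p + 2 * fst v * snd v * dx (dy F) p + snd v ^ 2 * dy (dy F) p.

Lemma Ebound (F : C -> R) (p : C) (eta del h v1 v2 Bv : R) : 0 < h -> 0 <= eta ->
  (forall a b, Rabs a < del -> Rabs b < del ->
  Rabs (F (fst p + a, snd p + b) + F (fst p - a, snd p - b) - 2 * F p
        - (a ^ 2 * dx (dx F) p + 2 * a * b * dx (dy F) p + b ^ 2 * dy (dy F) p))
  <= 3 * eta * (a ^ 2 + b ^ 2)) ->
  Rabs v1 <= Bv -> Rabs v2 <= Bv -> h * Bv < del ->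
  Rabs ((F (fst p + h * v1, snd p + h * v2) + F (fst p - h * v1, snd p - h * v2) - 2 * F p)
        / (h * h) - QF F p (v1, v2)) <= 6 * eta * Bv ^ 2.
Proof.
  intros Hh He HK H1 H2 Hd.
  assert (A1 : Rabs (h * v1) < del).
  { rewrite Rabs_mult, (Rabs_right h) by lra. eapply Rle_lt_trans; [|exact Hd]. apply Rmult_le_compat_l; lra. }
  assert (A2 : Rabs (h * v2) < del).
  { rewrite Rabs_mult, (Rabs_right h) by lra. eapply Rle_lt_trans; [|exact Hd]. apply Rmult_le_compat_l; lra. }
  specialize (HK _ _ A1 A2).
  unfold QF; simpl.
  match goal with |- Rabs ?X <= _ => match type of HK with Rabs ?Y <= _ =>
    replace X with (Y / (h * h)) by (field; lra) end end.
  unfold Rdiv. rewrite Rabs_mult, (Rabs_right (/ (h * h))).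
  2:{ apply Rle_ge, Rlt_le, Rinv_0_lt_compat. nra. }
  apply Rle_trans with (3 * eta * ((h * v1) ^ 2 + (h * v2) ^ 2) * / (h * h)).
  { apply Rmult_le_compat_r; [|exact HK]. apply Rlt_le, Rinv_0_lt_compat. nra. }
  replace (3 * eta * ((h * v1) ^ 2 + (h * v2) ^ 2) * / (h * h)) with (3 * eta * (v1 ^ 2 + v2 ^ 2))
    by (field; lra).
  rewrite <- (pow2_abs v1), <- (pow2_abs v2).
  assert (0 <= Rabs v1) by apply Rabs_pos. assert (0 <= Rabs v2) by apply Rabs_pos.
  assert (Rabs v1 ^ 2 <= Bv ^ 2) by (apply pow_incr; lra).
  assert (Rabs v2 ^ 2 <= Bv ^ 2) by (apply pow_incr; lra).
  nra.
Qed.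

Definition Qc (rho : C -> C) (p v : C) : C :=
  (QF (fun z => Re (rho z)) p v, QF (fun z => Im (rho z)) p v).

Definition PSI (rho : C -> C) (p l1 l2 mu c : C) (h : R) (z : C) : C :=
  let k := Cmult c (/ (h * h), 0) in
  let a1 := Cmult (h, 0) l1 in let a3 := Cmult (h, 0) l2 in
  Cplus (Cplus (Cplus (Cplus (Cmult k (rho (Cplus (Cmult a1 z) p)))
                             (Cmult k (rho (Cplus (Cmult (Copp a1) z) p))))
                      (Cmult (Cmult k mu) (rho (Cplus (Cmult a3 z) p))))
               (Cmult (Cmult k mu) (rho (Cplus (Cmult (Copp a3) z) p))))
        (Copp (Cmult (Cplus (Cmult k (2, 0)) (Cmult (Cmult k mu) (2, 0))) (rho p))).

Lemma lin_bound (l z : C) (B : R) : Rabs (fst z) <= B -> Rabs (snd z) <= B ->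
  Rabs (fst (Cmult l z)) <= (Rabs (fst l) + Rabs (snd l)) * B /\
  Rabs (snd (Cmult l z)) <= (Rabs (fst l) + Rabs (snd l)) * B.
Proof.
  intros Hx Hy. simpl.
  assert (0 <= Rabs (fst l)) by apply Rabs_pos. assert (0 <= Rabs (snd l)) by apply Rabs_pos.
  split.
  - unfold Rminus. eapply Rle_trans. apply Rabs_triang. rewrite Rabs_Ropp, !Rabs_mult.
    assert (Rabs (fst l) * Rabs (fst z) <= Rabs (fst l) * B) by (apply Rmult_le_compat_l; lra).
    assert (Rabs (snd l) * Rabs (snd z) <= Rabs (snd l) * B) by (apply Rmult_le_compat_l; lra).
    lra.
  - eapply Rle_trans. apply Rabs_triang. rewrite !Rabs_mult.
    assert (Rabs (fst l) * Rabs (snd z) <= Rabs (fst l) * B) by (apply Rmult_le_compat_l; lra).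
    assert (Rabs (snd l) * Rabs (fst z) <= Rabs (snd l) * B) by (apply Rmult_le_compat_l; lra).
    lra.
Qed.

Definition KLprop (F : C -> R) (p : C) (eta del : R) : Prop :=
  forall a b, Rabs a < del -> Rabs b < del ->
  Rabs (F (fst p + a, snd p + b) + F (fst p - a, snd p - b) - 2 * F p
        - (a ^ 2 * dx (dx F) p + 2 * a * b * dx (dy F) p + b ^ 2 * dy (dy F) p))
  <= 3 * eta * (a ^ 2 + b ^ 2).

Lemma GA (rho : C -> C) (Hrho : C2C rho) (p l1 l2 mu c : C) (B : R) (HB : 0 <= B)
  (K : C -> Prop) (HK : forall z, K z -> Rabs (fst z) <= B /\ Rabs (snd z) <= B)
  (eps : R) (He : 0 < eps) :
  exists h, 0 < h /\ forall z, K z ->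
  Cmod (Cminus (PSI rho p l1 l2 mu c h z)
     (Cmult c (Cplus (Qc rho p (Cmult l1 z)) (Cmult mu (Qc rho p (Cmult l2 z)))))) <= eps / 2.
Proof.
  destruct Hrho as [HR HI].
  set (Bl1 := (Rabs (fst l1) + Rabs (snd l1)) * B).
  set (Bl2 := (Rabs (fst l2) + Rabs (snd l2)) * B).
  assert (HB1 : 0 <= Bl1).
  { unfold Bl1. apply Rmult_le_pos; [|lra]. assert (0 <= Rabs (fst l1)) by apply Rabs_pos.
    assert (0 <= Rabs (snd l1)) by apply Rabs_pos. lra. }
  assert (HB2 : 0 <= Bl2).
  { unfold Bl2. apply Rmult_le_pos; [|lra]. assert (0 <= Rabs (fst l2)) by apply Rabs_pos.
    assert (0 <= Rabs (snd l2)) by apply Rabs_pos. lra. }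
  assert (Hc0 : 0 <= Cmod c) by apply Cmod_ge_0.
  assert (Hm0 : 0 <= Cmod mu) by apply Cmod_ge_0.
  set (W := Cmod c * (12 * Bl1 ^ 2 + Cmod mu * (12 * Bl2 ^ 2)) + 1).
  assert (HW : 1 <= W).
  { unfold W. assert (0 <= Bl1 ^ 2) by apply pow2_ge_0. assert (0 <= Bl2 ^ 2) by apply pow2_ge_0.
    assert (0 <= Cmod mu * (12 * Bl2 ^ 2)) by (apply Rmult_le_pos; lra).
    assert (0 <= Cmod c * (12 * Bl1 ^ 2 + Cmod mu * (12 * Bl2 ^ 2))) by (apply Rmult_le_pos; lra).
    lra. }
  set (eta := eps / (2 * W)).
  assert (Heta : 0 < eta) by (unfold eta; apply Rdiv_lt_0_compat; lra).
  destruct (KL _ HR p eta Heta) as [dR [HdR KR]].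
  destruct (KL _ HI p eta Heta) as [dI [HdI KI]].
  set (del := Rmin dR dI).
  assert (Hdel : 0 < del) by (apply Rmin_pos; lra).
  set (h := del / (Bl1 + Bl2 + 1)).
  assert (Hh : 0 < h) by (unfold h; apply Rdiv_lt_0_compat; lra).
  assert (Hh1 : h * Bl1 < del).
  { unfold h. apply Rle_lt_trans with (del / (Bl1 + Bl2 + 1) * (Bl1 + Bl2)).
    apply Rmult_le_compat_l; [apply Rlt_le, Rdiv_lt_0_compat; lra | lra].
    replace (del / (Bl1 + Bl2 + 1) * (Bl1 + Bl2)) with (del - del / (Bl1 + Bl2 + 1)) by (field; lra).
    assert (0 < del / (Bl1 + Bl2 + 1)) by (apply Rdiv_lt_0_compat; lra). lra. }
  assert (Hh2 : h * Bl2 < del).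
  { unfold h. apply Rle_lt_trans with (del / (Bl1 + Bl2 + 1) * (Bl1 + Bl2)).
    apply Rmult_le_compat_l; [apply Rlt_le, Rdiv_lt_0_compat; lra | lra].
    replace (del / (Bl1 + Bl2 + 1) * (Bl1 + Bl2)) with (del - del / (Bl1 + Bl2 + 1)) by (field; lra).
    assert (0 < del / (Bl1 + Bl2 + 1)) by (apply Rdiv_lt_0_compat; lra). lra. }
  assert (KR' : KLprop (fun z => Re (rho z)) p eta del) by
    (unfold KLprop; intros a b Ha Hb; apply KR; (eapply Rlt_le_trans; [eassumption|apply Rmin_l])).
  assert (KI' : KLprop (fun z => Im (rho z)) p eta del) by
    (unfold KLprop; intros a b Ha Hb; apply KI; (eapply Rlt_le_trans; [eassumption|apply Rmin_r])).
  exists h. split; [exact Hh|]. intros z Hz.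
  destruct (HK z Hz) as [Hx Hy].
  destruct (lin_bound l1 z B Hx Hy) as [V11 V12].
  destruct (lin_bound l2 z B Hx Hy) as [V21 V22].
  fold Bl1 in V11, V12. fold Bl2 in V21, V22.
  set (v1 := Cmult l1 z) in *. set (v2 := Cmult l2 z) in *.
  assert (ER1 := Ebound _ p eta del h (fst v1) (snd v1) Bl1 Hh (Rlt_le _ _ Heta) KR' V11 V12 Hh1).
  assert (EI1 := Ebound _ p eta del h (fst v1) (snd v1) Bl1 Hh (Rlt_le _ _ Heta) KI' V11 V12 Hh1).
  assert (ER2 := Ebound _ p eta del h (fst v2) (snd v2) Bl2 Hh (Rlt_le _ _ Heta) KR' V21 V22 Hh2).
  assert (EI2 := Ebound _ p eta del h (fst v2) (snd v2) Bl2 Hh (Rlt_le _ _ Heta) KI' V21 V22 Hh2).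
  cbv beta in ER1, EI1, ER2, EI2.
  match type of ER1 with Rabs ?X <= _ => set (e1r := X) in ER1 end.
  match type of EI1 with Rabs ?X <= _ => set (e1i := X) in EI1 end.
  match type of ER2 with Rabs ?X <= _ => set (e2r := X) in ER2 end.
  match type of EI2 with Rabs ?X <= _ => set (e2i := X) in EI2 end.
  assert (Eq : Cminus (PSI rho p l1 l2 mu c h z) (Cmult c (Cplus (Qc rho p v1) (Cmult mu (Qc rho p v2))))
     = Cmult c (Cplus (e1r, e1i) (Cmult mu (e2r, e2i)))).
  { unfold PSI. cbv zeta.
    assert (A1 : Cplus (Cmult (Cmult (h, 0) l1) z) p = (fst p + h * fst v1, snd p + h * snd v1))
      by (unfold v1; apply injective_projections; simpl; ring).
    assert (A2 : Cplus (Cmult (Copp (Cmult (h, 0) l1)) z) p = (fst p - h * fst v1, snd p - h * snd v1))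
      by (unfold v1; apply injective_projections; simpl; ring).
    assert (A3 : Cplus (Cmult (Cmult (h, 0) l2) z) p = (fst p + h * fst v2, snd p + h * snd v2))
      by (unfold v2; apply injective_projections; simpl; ring).
    assert (A4 : Cplus (Cmult (Copp (Cmult (h, 0) l2)) z) p = (fst p - h * fst v2, snd p - h * snd v2))
      by (unfold v2; apply injective_projections; simpl; ring).
    rewrite A1, A2, A3, A4.
    unfold e1r, e1i, e2r, e2i, Qc, QF, Re, Im.
    apply injective_projections; simpl; field; lra. }
  rewrite Eq, Cmod_mult.
  assert (M1 : Cmod (e1r, e1i) <= 12 * eta * Bl1 ^ 2).
  { eapply Rle_trans. apply Cmod_le_sum. simpl. lra. }
  assert (M2 : Cmod (e2r, e2i) <= 12 * eta * Bl2 ^ 2).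
  { eapply Rle_trans. apply Cmod_le_sum. simpl. lra. }
  assert (M3 : Cmod (Cplus (e1r, e1i) (Cmult mu (e2r, e2i))) <= 12 * eta * Bl1 ^ 2 + Cmod mu * (12 * eta * Bl2 ^ 2)).
  { eapply Rle_trans. apply Cmod_triangle. rewrite Cmod_mult.
    assert (Cmod mu * Cmod (e2r, e2i) <= Cmod mu * (12 * eta * Bl2 ^ 2)) by (apply Rmult_le_compat_l; lra).
    lra. }
  apply Rle_trans with (Cmod c * (12 * eta * Bl1 ^ 2 + Cmod mu * (12 * eta * Bl2 ^ 2))).
  { apply Rmult_le_compat_l; lra. }
  replace (Cmod c * (12 * eta * Bl1 ^ 2 + Cmod mu * (12 * eta * Bl2 ^ 2))) with (eta * (W - 1))
    by (unfold W; ring).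
  unfold eta. apply Rle_trans with (eps / (2 * W) * W).
  { apply Rmult_le_compat_l. apply Rlt_le, Rdiv_lt_0_compat; lra. lra. }
  right. field. lra.
Qed.

Lemma open_fst_gt (a : R) : open (fun z : C => a < fst z).
Proof.
  apply (open_comp (T := prod_UniformSpace R_UniformSpace R_UniformSpace) fst (fun u => a < u)).
  - intros [x y] _. apply continuous_fst.
  - apply open_gt.
Qed.
Lemma open_fst_lt (a : R) : open (fun z : C => fst z < a).
Proof.
  apply (open_comp (T := prod_UniformSpace R_UniformSpace R_UniformSpace) fst (fun u => u < a)).
  - intros [x y] _. apply continuous_fst.
  - apply open_lt.
Qed.
Lemma open_snd_gt (a : R) : open (fun z : C => a < snd z).
Proof.
  apply (open_comp (T := prod_UniformSpace R_UniformSpace R_UniformSpace) snd (fun u => a < u)).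
  - intros [x y] _. apply continuous_snd.
  - apply open_gt.
Qed.
Lemma open_snd_lt (a : R) : open (fun z : C => snd z < a).
Proof.
  apply (open_comp (T := prod_UniformSpace R_UniformSpace R_UniformSpace) snd (fun u => u < a)).
  - intros [x y] _. apply continuous_snd.
  - apply open_lt.
Qed.

Lemma compact_bounded (K : C -> Prop) : compactC K ->
  exists B, 0 <= B /\ forall z, K z -> Rabs (fst z) <= B /\ Rabs (snd z) <= B.
Proof.
  intros HK.
  destruct (HK C (fun c z => (fst c - 1 < fst z /\ fst z < fst c + 1) /\ (snd c - 1 < snd z /\ snd z < snd c + 1))) as [l Hl].
  - intros c. apply open_and; apply open_and.
    apply open_fst_gt. apply open_fst_lt. apply open_snd_gt. apply open_snd_lt.
  - intros z _. exists z. lra.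
  - set (B := List.fold_right (fun c acc => Rabs (fst c) + Rabs (snd c) + 1 + acc) 0 l).
    assert (HB : 0 <= B /\ forall c, List.In c l -> Rabs (fst c) + Rabs (snd c) + 1 <= B).
    { unfold B; clear Hl; induction l as [|c l IH]; simpl.
      - split; [lra|tauto].
      - destruct IH as [IH1 IH2].
        assert (0 <= Rabs (fst c)) by apply Rabs_pos. assert (0 <= Rabs (snd c)) by apply Rabs_pos.
        split; [lra|]. intros c' [<-|Hc]. lra. specialize (IH2 c' Hc).
        assert (0 <= Rabs (fst c')) by apply Rabs_pos. assert (0 <= Rabs (snd c')) by apply Rabs_pos. lra. }
    destruct HB as [HB0 HB]. exists B. split; [exact HB0|].
    intros z Kz. destruct (Hl z Kz) as [c [Hc [[H1 H2] [H3 H4]]]].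
    specialize (HB c Hc).
    assert (0 <= Rabs (fst c)) by apply Rabs_pos. assert (0 <= Rabs (snd c)) by apply Rabs_pos.
    split; revert H1 H2 H3 H4 HB; split_Rabs; lra.
Qed.

Lemma FIN (rho : C -> C) (Hrho : C2C rho) (K : C -> Prop) (HK : compactC K) (eps : R) (Heps : 0 < eps)
  (p l1 l2 mu s : C) (T : C -> C) (Hs : s <> 0%C)
  (Hid : forall z, Cplus (Qc rho p (Cmult l1 z)) (Cmult mu (Qc rho p (Cmult l2 z))) = Cmult s (T z)) :
  exists (phi : C -> C4) (psi : C4 -> C),
    Caffine_in phi /\ Caffine_out psi /\
    sup_lt K (fun z => Cmod (Cminus (psi (rho4 rho (phi z))) (T z))) eps.
Proof.
  destruct (compact_bounded K HK) as [B [HB HKB]].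
  destruct (GA rho Hrho p l1 l2 mu (Cinv s) B HB K HKB eps Heps) as [h [Hh Hb]].
  set (k := Cmult (Cinv s) (/ (h * h), 0)).
  set (a1 := Cmult (h, 0) l1). set (a3 := Cmult (h, 0) l2).
  exists (fun z => (Cplus (Cmult a1 z) p, Cplus (Cmult (Copp a1) z) p,
                    Cplus (Cmult a3 z) p, Cplus (Cmult (Copp a3) z) p)).
  exists (fun w => let '(w1, w2, w3, w4) := w in
     Cplus (Cplus (Cplus (Cplus (Cmult k w1) (Cmult k w2)) (Cmult (Cmult k mu) w3))
        (Cmult (Cmult k mu) w4))
       (Copp (Cmult (Cplus (Cmult k (2, 0)) (Cmult (Cmult k mu) (2, 0))) (rho p)))).
  split; [|split].
  - exists a1, (Copp a1), a3, (Copp a3), p, p, p, p. intros z. reflexivity.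
  - exists k, k, (Cmult k mu), (Cmult k mu),
      (Copp (Cmult (Cplus (Cmult k (2, 0)) (Cmult (Cmult k mu) (2, 0))) (rho p))).
    intros. reflexivity.
  - exists (eps / 2). split; [lra|]. intros z Kz.
    specialize (Hb z Kz). rewrite Hid, Cmult_assoc, Cinv_l, Cmult_1_l in Hb by exact Hs.
    exact Hb.
Qed.

From Stdlib Require Import Classical.

Lemma exists_p (rho : C -> C) (Hrho : C2C rho) (Hna : ~ R_affine rho) :
  exists p, ~ (dx (dx (fun z => Re (rho z))) p = 0 /\ dx (dx (fun z => Im (rho z))) p = 0 /\
               dx (dy (fun z => Re (rho z))) p = 0 /\ dx (dy (fun z => Im (rho z))) p = 0 /\
               dy (dy (fun z => Re (rho z))) p = 0 /\ dy (dy (fun z => Im (rho z))) p = 0).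
Proof.
  apply NNPP. intros Hn. apply Hna.
  assert (Hz : forall p, dx (dx (fun z => Re (rho z))) p = 0 /\ dx (dx (fun z => Im (rho z))) p = 0 /\
               dx (dy (fun z => Re (rho z))) p = 0 /\ dx (dy (fun z => Im (rho z))) p = 0 /\
               dy (dy (fun z => Re (rho z))) p = 0 /\ dy (dy (fun z => Im (rho z))) p = 0).
  { intros p. apply NNPP. intros H. apply Hn. exists p. exact H. }
  destruct Hrho as [HR HI].
  destruct (zero_affine _ HR) as [a [b [e He]]].
  { intros p. destruct (Hz p) as [? [? [? [? [? ?]]]]]. auto. }
  destruct (zero_affine _ HI) as [c [d [f Hf]]].
  { intros p. destruct (Hz p) as [? [? [? [? [? ?]]]]]. auto. }
  exists a, b, c, d, e, f. intros x y.
  rewrite <- He, <- Hf. apply injective_projections; reflexivity.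
Qed.

Theorem proposition3p2 (rho : C -> C) (Hrho : C2C rho) (Hna : ~ R_affine rho)
  (K : C -> Prop) (HK : compactC K) (eps : R) (Heps : 0 < eps) :
  exists (phi : C -> C4) (psi : C4 -> C),
    Caffine_in phi /\ Caffine_out psi /\
    (sup_lt K (fun z => Cmod (Cminus (psi (rho4 rho (phi z))) (Cmult z (Cconj z)))) eps \/
     sup_lt K (fun z => Cmod (Cminus (psi (rho4 rho (phi z))) (Cmult z z))) eps \/
     sup_lt K (fun z => Cmod (Cminus (psi (rho4 rho (phi z))) (Cmult (Cconj z) (Cconj z)))) eps).
Proof.
  destruct (exists_p rho Hrho Hna) as [p Hp].
  set (A1 := dx (dx (fun z => Re (rho z))) p) in *. set (A2 := dx (dx (fun z => Im (rho z))) p) in *.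
  set (B1 := dx (dy (fun z => Re (rho z))) p) in *. set (B2 := dx (dy (fun z => Im (rho z))) p) in *.
  set (G1 := dy (dy (fun z => Re (rho z))) p) in *. set (G2 := dy (dy (fun z => Im (rho z))) p) in *.
  destruct (classic (A1 + G1 = 0 /\ A2 + G2 = 0)) as [HAG | HAG].
  2:{ destruct (FIN rho Hrho K HK eps Heps p (1, 0) (0, 1) (1, 0) (A1 + G1, A2 + G2)
        (fun z => Cmult z (Cconj z))) as [phi [psi [H1 [H2 H3]]]].
      - intros E. apply HAG. injection E. intros; split; assumption.
      - intros z. unfold Qc, QF. fold A1 A2 B1 B2 G1 G2.
        apply injective_projections; simpl; fold A1 A2 B1 B2 G1 G2; ring.
      - exists phi, psi. split; [exact H1|split; [exact H2|left; exact H3]]. }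
  destruct HAG as [HAG1 HAG2].
  destruct (classic (A1 + B2 = 0 /\ A2 - B1 = 0)) as [HS | HS].
  2:{ destruct (FIN rho Hrho K HK eps Heps p (1, 0) (1, 1) (0, - (1/2)) (A1 + B2, A2 - B1)
        (fun z => Cmult z z)) as [phi [psi [H1 [H2 H3]]]].
      - intros E. apply HS. injection E. intros; split; assumption.
      - intros z. unfold Qc, QF. fold A1 A2 B1 B2 G1 G2.
        replace G1 with (- A1) by lra. replace G2 with (- A2) by lra.
        apply injective_projections; simpl; fold A1 A2 B1 B2; field.
      - exists phi, psi. split; [exact H1|split; [exact H2|right; left; exact H3]]. }
  destruct HS as [HS1 HS2].
  destruct (classic (A1 - B2 = 0 /\ A2 + B1 = 0)) as [HT | HT].
  2:{ destruct (FIN rho Hrho K HK eps Heps p (1, 0) (1, 1) (0, 1/2) (A1 - B2, A2 + B1)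
        (fun z => Cmult (Cconj z) (Cconj z))) as [phi [psi [H1 [H2 H3]]]].
      - intros E. apply HT. injection E. intros; split; assumption.
      - intros z. unfold Qc, QF. fold A1 A2 B1 B2 G1 G2.
        replace G1 with (- A1) by lra. replace G2 with (- A2) by lra.
        apply injective_projections; simpl; fold A1 A2 B1 B2; field.
      - exists phi, psi. split; [exact H1|split; [exact H2|right; right; exact H3]]. }
  exfalso. apply Hp. destruct HT. repeat split; lra.
Qed.
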